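(* Let $R$ be a local ring (with maximal ideal $\mathcal{M}$) which is Noetherian (i.e., both left and right Noetherian). If every left $R$-module generated by two elements is a direct sum of cyclic modules, then one of the following holds: (a) $R$ is an Artinian principal left ideal ring; (b) $R$ is an Artinian principal right ideal ring; (c) $R$ is a prime ring and every two-sided ideal of $R$ is principal both as a left ideal and as a right ideal.
   Context: All rings have identity and all modules are unital. A ring $R$ is local if it has a unique maximal left ideal $\mathcal{M}$ (equivalently, $R/J(R)$ is a division ring, $\mathcal{M}=J(R)$). ''Artinian'' means both left and right Artinian; ''Noetherian'' means both left and right Noetherian. *)

(* Defs.v *)
From HB Require Import structures.
From mathcomp Require Import all_boot all_order all_algebra.
Set Implicit Arguments. Unset Strict Implicit. Unset Printing Implicit Defensive.
Import GRing.Theory.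
Local Open Scope ring_scope.

Section RingNotions.
Variable R : nzRingType.

Definition same_set (A B : R -> Prop) := forall x, A x <-> B x.

Definition left_ideal (I : R -> Prop) :=
  [/\ I 0, (forall x y, I x -> I y -> I (x + y)) & (forall r x, I x -> I (r * x))].

Definition right_ideal (I : R -> Prop) :=
  [/\ I 0, (forall x y, I x -> I y -> I (x + y)) & (forall r x, I x -> I (x * r))].

Definition twosided_ideal (I : R -> Prop) := left_ideal I /\ right_ideal I.

Definition maximal_left_ideal (M : R -> Prop) :=
  [/\ left_ideal M, ~ M 1 &
      forall I, left_ideal I -> (forall x, M x -> I x) -> same_set I M \/ I 1].

Definition local_ring :=
  exists M, maximal_left_ideal M /\
    forall N, maximal_left_ideal N -> same_set N M.

Definition left_noetherian :=
  forall I : nat -> R -> Prop, (forall n, left_ideal (I n)) ->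
    (forall n x, I n x -> I n.+1 x) ->
    exists n, forall m, (n <= m)%N -> same_set (I m) (I n).

Definition right_noetherian :=
  forall I : nat -> R -> Prop, (forall n, right_ideal (I n)) ->
    (forall n x, I n x -> I n.+1 x) ->
    exists n, forall m, (n <= m)%N -> same_set (I m) (I n).

Definition left_artinian :=
  forall I : nat -> R -> Prop, (forall n, left_ideal (I n)) ->
    (forall n x, I n.+1 x -> I n x) ->
    exists n, forall m, (n <= m)%N -> same_set (I m) (I n).

Definition right_artinian :=
  forall I : nat -> R -> Prop, (forall n, right_ideal (I n)) ->
    (forall n x, I n.+1 x -> I n x) ->
    exists n, forall m, (n <= m)%N -> same_set (I m) (I n).

Definition noetherian := left_noetherian /\ right_noetherian.
Definition artinian := left_artinian /\ right_artinian.

Definition principal_left (I : R -> Prop) :=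
  exists a, forall x, I x <-> exists r, x = r * a.
Definition principal_right (I : R -> Prop) :=
  exists a, forall x, I x <-> exists r, x = a * r.

Definition principal_left_ideal_ring :=
  forall I, left_ideal I -> principal_left I.
Definition principal_right_ideal_ring :=
  forall I, right_ideal I -> principal_right I.

(* prime ring: R <> 0 (automatic for nzRingType) and AB = 0 for two-sided
   ideals A, B forces A = 0 or B = 0 *)
Definition prime_ring :=
  forall A B : R -> Prop, twosided_ideal A -> twosided_ideal B ->
    (forall a b, A a -> B b -> a * b = 0) ->
    (forall a, A a -> a = 0) \/ (forall b, B b -> b = 0).

End RingNotions.

Section ModuleNotions.
Variables (R : nzRingType) (M : lmodType R).

Definition two_generated :=
  exists a b : M, forall x : M, exists r s : R, x = r *: a + s *: b.

(* M is the (internal) direct sum of the cyclic submodules R m_i *)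
Definition direct_sum_of_cyclics :=
  exists ms : seq M,
    (forall x : M, exists rs : seq R, size rs = size ms /\
        x = \sum_(i < size ms) rs`_i *: ms`_i) /\
    (forall rs : seq R, size rs = size ms ->
        \sum_(i < size ms) rs`_i *: ms`_i = 0 ->
        forall i, (i < size ms)%N -> rs`_i *: ms`_i = 0).

End ModuleNotions.

(* Main.v *)
Require Import Defs.
From HB Require Import structures.
From mathcomp Require Import all_boot all_order all_algebra.
From Stdlib Require Import ClassicalEpsilon Classical FunctionalExtensionality PropExtensionality.
Set Implicit Arguments. Unset Strict Implicit. Unset Printing Implicit Defensive.
Import GRing.Theory.
Local Open Scope ring_scope.

Definition submod (R : nzRingType) (V : lmodType R) (N : V -> Prop) :=
  [/\ N 0, forall x y, N x -> N y -> N (x + y) & forall r x, N x -> N (r *: x)].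

Definition cr (R : nzRingType) (V : lmodType R) (N : V -> Prop) (v : V) : V :=
  epsilon (inhabits (0 : V)) (fun w => N (v - w)).

Lemma submodN (R : nzRingType) (V : lmodType R) (N : V -> Prop) :
  submod N -> forall x, N x -> N (- x).
Proof. by case=> _ _ HZ x Hx; rewrite -scaleN1r; apply: HZ. Qed.

Lemma submodB (R : nzRingType) (V : lmodType R) (N : V -> Prop) :
  submod N -> forall x y, N x -> N y -> N (x - y).
Proof. move=> HN x y Hx Hy; have [_ HD _] := HN; apply: HD => //; exact: submodN. Qed.

Lemma crP (R : nzRingType) (V : lmodType R) (N : V -> Prop) :
  submod N -> forall v, N (v - cr N v).
Proof.
move=> HN v; rewrite /cr; apply: (epsilon_spec (inhabits (0:V)) (fun w => N (v - w))); exists v; rewrite subrr; by case: HN.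
Qed.

Lemma crE (R : nzRingType) (V : lmodType R) (N : V -> Prop) :
  submod N -> forall v w, N (v - w) -> cr N v = cr N w.
Proof.
move=> HN v w Hvw; rewrite /cr; f_equal; apply: functional_extensionality => x.
apply: propositional_extensionality; split => H.
- have -> : w - x = (v - x) - (v - w) by rewrite opprB [_ + (w - v)]addrC subrKA.
  exact: submodB.
- have -> : v - x = (v - w) + (w - x) by rewrite addrA addrNK.
  by have [_ HD _] := HN; apply: HD.
Qed.

Lemma crK (R : nzRingType) (V : lmodType R) (N : V -> Prop) :
  submod N -> forall v, cr N (cr N v) = cr N v.
Proof.
move=> HN v; apply: crE => //; rewrite -opprB; apply: (submodN HN); exact: crP.
Qed.

Definition quotT (R : nzRingType) (V : lmodType R) (N : V -> Prop) (HN : submod N) :=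
  {v : V | cr N v == v}.

HB.instance Definition _ (R : nzRingType) (V : lmodType R) (N : V -> Prop) (HN : submod N) :=
  Choice.on (quotT HN).

Definition mkq (R : nzRingType) (V : lmodType R) (N : V -> Prop) (HN : submod N) (v : V)
  : quotT HN := exist _ (cr N v) (introT eqP (crK HN v)).

Lemma mkq_eq (R : nzRingType) (V : lmodType R) (N : V -> Prop) (HN : submod N) v w :
  N (v - w) -> mkq HN v = mkq HN w.
Proof. move=> H; apply: val_inj => /=; exact: crE. Qed.

Lemma mkq_val (R : nzRingType) (V : lmodType R) (N : V -> Prop) (HN : submod N) (q : quotT HN) :
  mkq HN (val q) = q.
Proof. apply: val_inj => /=; exact: (eqP (valP q)). Qed.

Lemma mkq_valmk (R : nzRingType) (V : lmodType R) (N : V -> Prop) (HN : submod N) (v : V) :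
  N (val (mkq HN v) - v).
Proof. rewrite /= -opprB; apply: (submodN HN); exact: crP. Qed.

Lemma mkq_add_l (R : nzRingType) (V : lmodType R) (N : V -> Prop) (HN : submod N) v w :
  mkq HN (val (mkq HN v) + w) = mkq HN (v + w).
Proof. apply: mkq_eq; rewrite opprD addrACA subrr addr0; exact: mkq_valmk. Qed.

Lemma mkq_add_r (R : nzRingType) (V : lmodType R) (N : V -> Prop) (HN : submod N) v w :
  mkq HN (w + val (mkq HN v)) = mkq HN (w + v).
Proof. by rewrite addrC mkq_add_l addrC. Qed.

Lemma mkq_opp (R : nzRingType) (V : lmodType R) (N : V -> Prop) (HN : submod N) v :
  mkq HN (- val (mkq HN v)) = mkq HN (- v).
Proof. apply: mkq_eq; rewrite opprK addrC -opprB; apply: (submodN HN); exact: mkq_valmk. Qed.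

Lemma mkq_scale (R : nzRingType) (V : lmodType R) (N : V -> Prop) (HN : submod N) r v :
  mkq HN (r *: val (mkq HN v)) = mkq HN (r *: v).
Proof. apply: mkq_eq; rewrite -scalerBr; have [_ _ HZ] := HN; apply: (HZ r); exact: mkq_valmk. Qed.


Definition qzero (R : nzRingType) (V : lmodType R) (N : V -> Prop) (HN : submod N) : quotT HN :=
  mkq HN 0.
Definition qopp (R : nzRingType) (V : lmodType R) (N : V -> Prop) (HN : submod N) (q : quotT HN) : quotT HN :=
  mkq HN (- val q).
Definition qadd (R : nzRingType) (V : lmodType R) (N : V -> Prop) (HN : submod N) (q1 q2 : quotT HN) : quotT HN :=
  mkq HN (val q1 + val q2).
Definition qscale (R : nzRingType) (V : lmodType R) (N : V -> Prop) (HN : submod N) (r : R) (q : quotT HN) : quotT HN :=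
  mkq HN (r *: val q).

Lemma qaddA (R : nzRingType) (V : lmodType R) (N : V -> Prop) (HN : submod N) :
  associative (@qadd R V N HN).
Proof.
by move=> a b c; rewrite /qadd mkq_add_l mkq_add_r addrA.
Qed.
Lemma qaddC (R : nzRingType) (V : lmodType R) (N : V -> Prop) (HN : submod N) :
  commutative (@qadd R V N HN).
Proof. by move=> a b; rewrite /qadd addrC. Qed.
Lemma qadd0 (R : nzRingType) (V : lmodType R) (N : V -> Prop) (HN : submod N) :
  left_id (qzero HN) (@qadd R V N HN).
Proof. by move=> a; rewrite /qadd /qzero mkq_add_l add0r mkq_val. Qed.
Lemma qaddN (R : nzRingType) (V : lmodType R) (N : V -> Prop) (HN : submod N) :
  left_inverse (qzero HN) (@qopp R V N HN) (@qadd R V N HN).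
Proof. by move=> a; rewrite /qadd /qopp /qzero mkq_add_l addNr. Qed.

HB.instance Definition _ (R : nzRingType) (V : lmodType R) (N : V -> Prop) (HN : submod N) :=
  GRing.isZmodule.Build (quotT HN) (@qaddA R V N HN) (@qaddC R V N HN) (@qadd0 R V N HN) (@qaddN R V N HN).

Lemma qscaleA (R : nzRingType) (V : lmodType R) (N : V -> Prop) (HN : submod N) a b (v : quotT HN) :
  qscale a (qscale b v) = qscale (a * b) v.
Proof. by rewrite /qscale mkq_scale scalerA. Qed.
Lemma qscale1 (R : nzRingType) (V : lmodType R) (N : V -> Prop) (HN : submod N) :
  left_id 1 (@qscale R V N HN).
Proof. by move=> v; rewrite /qscale scale1r mkq_val. Qed.
Lemma qscaleDr (R : nzRingType) (V : lmodType R) (N : V -> Prop) (HN : submod N) :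
  right_distributive (@qscale R V N HN) +%R.
Proof.
move=> a u v; have addE : forall x y : quotT HN, x + y = qadd x y by [].
rewrite !addE /qscale /qadd mkq_scale mkq_add_l mkq_add_r scalerDr //.
Qed.
Lemma qscaleDl (R : nzRingType) (V : lmodType R) (N : V -> Prop) (HN : submod N) (v : quotT HN) :
  {morph (@qscale R V N HN)^~ v: a b / a + b}.
Proof.
move=> a b; have addE : forall x y : quotT HN, x + y = qadd x y by [].
by rewrite addE /qscale /qadd mkq_add_l mkq_add_r scalerDl.
Qed.

HB.instance Definition _ (R : nzRingType) (V : lmodType R) (N : V -> Prop) (HN : submod N) :=
  GRing.Zmodule_isLmodule.Build R (quotT HN) (@qscaleA R V N HN) (@qscale1 R V N HN)
   (@qscaleDr R V N HN) (@qscaleDl R V N HN).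


Definition piq (R : nzRingType) (V : lmodType R) (N : V -> Prop) (HN : submod N) (v : V) : quotT HN := mkq HN v.

Lemma piqD (R : nzRingType) (V : lmodType R) (N : V -> Prop) (HN : submod N) v w :
  piq HN (v + w) = piq HN v + piq HN w.
Proof.
have addE : forall x y : quotT HN, x + y = qadd x y by [].
by rewrite addE /qadd /piq mkq_add_l mkq_add_r.
Qed.

Lemma piqZ (R : nzRingType) (V : lmodType R) (N : V -> Prop) (HN : submod N) r v :
  piq HN (r *: v) = r *: piq HN v.
Proof.
have scE : forall x (y : quotT HN), x *: y = qscale x y by [].
by rewrite scE /qscale /piq mkq_scale.
Qed.

Lemma piq0 (R : nzRingType) (V : lmodType R) (N : V -> Prop) (HN : submod N) :
  piq HN 0 = 0.
Proof. by []. Qed.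

Lemma piq_eq0 (R : nzRingType) (V : lmodType R) (N : V -> Prop) (HN : submod N) v :
  piq HN v = 0 <-> N v.
Proof.
split => H.
- have E : cr N v = cr N 0 by move: (f_equal val H).
  have H1 := crP HN v; have H2 := crP HN 0.
  have -> : v = (v - cr N v) - (0 - cr N 0) by rewrite E sub0r opprK subrK.
  exact: submodB.
- have -> : (0 : quotT HN) = piq HN 0 by [].
  apply: mkq_eq; by rewrite subr0.
Qed.

Lemma piq_val (R : nzRingType) (V : lmodType R) (N : V -> Prop) (HN : submod N) (q : quotT HN) :
  piq HN (val q) = q.
Proof. exact: mkq_val. Qed.

Lemma piq_sum (R : nzRingType) (V : lmodType R) (N : V -> Prop) (HN : submod N) n (F : 'I_n -> V) :
  piq HN (\sum_(i < n) F i) = \sum_(i < n) piq HN (F i).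
Proof. apply: (big_morph (piq HN)) => //; exact: piqD. Qed.

Lemma fchoice (A B : Type) (P : A -> B -> Prop) :
  (forall x, exists y, P x y) -> exists f : A -> B, forall x, P x (f x).
Proof.
move=> H; exists (fun x => proj1_sig (constructive_indefinite_description _ (H x))).
move=> x; exact: proj2_sig.
Qed.

Lemma chain_mono (T : Type) (I : nat -> T -> Prop) :
  (forall n x, I n x -> I n.+1 x) -> forall n m x, (n <= m)%N -> I n x -> I m x.
Proof.
move=> H n m x; elim: m => [|m IH]; first by rewrite leqn0 => /eqP ->.
rewrite leq_eqVlt => /orP [/eqP -> //|Hlt] Hx; apply: H; exact: IH.
Qed.

Lemma chain_anti (T : Type) (I : nat -> T -> Prop) :
  (forall n x, I n.+1 x -> I n x) -> forall n m x, (n <= m)%N -> I m x -> I n x.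
Proof.
move=> H n m x; elim: m => [|m IH]; first by rewrite leqn0 => /eqP ->.
rewrite leq_eqVlt => /orP [/eqP -> //|Hlt] Hx; apply: IH => //; exact: H.
Qed.

Lemma noeth_strict (S : nzRingType) (C : nat -> S -> Prop) :
  left_noetherian S -> (forall n, left_ideal (C n)) -> (forall n x, C n x -> C n.+1 x) ->
  (forall n, exists x, C n.+1 x /\ ~ C n x) -> False.
Proof.
move=> HN HC Hinc Hs; have [n Hn] := HN C HC Hinc.
have [x [Hx1 Hx2]] := Hs n; apply: Hx2; by apply/(Hn n.+1).
Qed.

Definition lsub (S : Type) (A B : S -> Prop) := forall x, A x -> B x.

Lemma maxlemma (S : nzRingType) : left_noetherian S ->
  forall K L0 : S -> Prop, left_ideal K -> left_ideal L0 -> lsub L0 K ->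
  (exists x, K x /\ ~ L0 x) ->
  exists L, [/\ left_ideal L, lsub L0 L, lsub L K, (exists x, K x /\ ~ L x) &
     forall I, left_ideal I -> lsub L I -> lsub I K -> lsub I L \/ lsub K I].
Proof.
move=> HN K L0 HK HL0 HL0K Hex; apply: NNPP => Hno.
pose good L := [/\ left_ideal L, lsub L0 L, lsub L K & (exists x, K x /\ ~ L x)].
have step : forall L : S -> Prop, exists L', good L ->
   good L' /\ lsub L L' /\ exists x, L' x /\ ~ L x.
  move=> L; case: (classic (good L)) => Hg; last by exists L.
  apply: NNPP => H2; apply: Hno; case: Hg => [H1 H2' H3 H4]; exists L; split => //.
  move=> I HI HLI HIK; case: (classic (lsub I L)) => HIL; [by left | right].
  move=> x Kx; apply: NNPP => nIx; apply: H2; exists I => _; split.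
  - split => //; [move=> y /H2' /HLI // | by exists x].
  - split => //; apply: NNPP => H5; apply: HIL => y Iy; apply: NNPP => nLy; apply: H5; by exists y.
have [F HF] := fchoice step.
pose C n := iter n F L0.
have Cg : forall n, good (C n).
  elim=> [|n IH]; first by split => //.
  by have [[]] := HF _ IH.
apply: (noeth_strict HN (C := C)).
- by move=> n; case: (Cg n).
- by move=> n x Cx; have [_ [H _]] := HF _ (Cg n); apply: H.
- by move=> n; have [_ [_ H]] := HF _ (Cg n).
Qed.

Definition locJ (R : nzRingType) (J : R -> Prop) :=
  [/\ maximal_left_ideal J, (forall N, maximal_left_ideal N -> same_set N J) & left_noetherian R].

Definition unitR (R : nzRingType) (x : R) := exists y, y * x = 1 /\ x * y = 1.

Lemma J_li (R : nzRingType) (J : R -> Prop) : locJ J -> left_ideal J.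
Proof. by case=> [[]]. Qed.

Lemma J_n1 (R : nzRingType) (J : R -> Prop) : locJ J -> ~ J 1.
Proof. by case=> [[]]. Qed.

Lemma J0 (R : nzRingType) (J : R -> Prop) : locJ J -> J 0.
Proof. by move=> /J_li []. Qed.

Lemma JD (R : nzRingType) (J : R -> Prop) : locJ J -> forall x y, J x -> J y -> J (x + y).
Proof. by move=> /J_li []. Qed.

Lemma JM (R : nzRingType) (J : R -> Prop) : locJ J -> forall r x, J x -> J (r * x).
Proof. by move=> /J_li []. Qed.

Lemma JN (R : nzRingType) (J : R -> Prop) : locJ J -> forall x, J x -> J (- x).
Proof. move=> HL x Hx; rewrite -mulN1r; exact: JM. Qed.

Lemma JB (R : nzRingType) (J : R -> Prop) : locJ J -> forall x y, J x -> J y -> J (x - y).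
Proof. move=> HL x y Hx Hy; apply: JD => //; exact: JN. Qed.

Lemma proper_in_J (R : nzRingType) (J : R -> Prop) : locJ J ->
  forall I, left_ideal I -> ~ I 1 -> lsub I J.
Proof.
move=> HL I HI HI1; have [HJ HU HN] := HL.
have HK : left_ideal (fun _ : R => True) by [].
have [L [HLl HIL _ [x [_ nLx]] Hmax]] :=
  maxlemma HN HK HI (fun _ _ => Logic.I) (ex_intro _ 1 (conj Logic.I HI1)).
have nL1 : ~ L 1.
  move=> L1; apply: nLx; rewrite -(mulr1 x); case: HLl => _ _ H; exact: H.
have ML : maximal_left_ideal L.
  split => // I' HI' HLI'; case: (Hmax I' HI' HLI' (fun _ _ => Logic.I)) => H.
  - by left => y; split; [apply: H | apply: HLI'].
  - by right; apply: H.
move=> y Iy; by apply/(HU L ML); apply: HIL.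
Qed.

Lemma linv (R : nzRingType) (J : R -> Prop) : locJ J -> forall x, ~ J x -> exists y, y * x = 1.
Proof.
move=> HL x nJx; pose I := fun z : R => exists r, z = r * x.
have HI : left_ideal I.
  split; first by exists 0; rewrite mul0r.
  - by move=> a b [r ->] [s ->]; exists (r + s); rewrite mulrDl.
  - by move=> r a [s ->]; exists (r * s); rewrite mulrA.
case: (classic (I 1)) => [[r Hr]|nI1]; first by exists r.
exfalso; apply: nJx; apply: (proper_in_J HL HI nI1); by exists 1; rewrite mul1r.
Qed.

Lemma J_noinv (R : nzRingType) (J : R -> Prop) : locJ J -> forall x y, J x -> y * x <> 1.
Proof. move=> HL x y Jx E; apply: (J_n1 HL); rewrite -E; exact: JM. Qed.

Lemma nonJ_unit (R : nzRingType) (J : R -> Prop) : locJ J -> forall x, ~ J x -> unitR x.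
Proof.
move=> HL x nJx; have [s Hs] := linv HL nJx.
have nJs : ~ J s.
  move=> Js; have Je : J (x * s) by exact: JM.
  have Ne : ~ J (1 - x * s).
    move=> H; apply: (J_n1 HL); have := JD HL Je H; by rewrite addrC subrK.
  have [t Ht] := linv HL Ne.
  have E0 : (1 - x * s) * x = 0 by rewrite mulrBl mul1r -mulrA Hs mulr1 subrr.
  have x0 : x = 0 by rewrite -(mul1r x) -Ht -mulrA E0 mulr0.
  by move: Hs; rewrite x0 mulr0 => /esym/eqP; rewrite oner_eq0.
have [t Ht] := linv HL nJs.
have tx : t = x by rewrite -(mulr1 t) -Hs mulrA Ht mul1r.
by exists s; split => //; rewrite -tx.
Qed.

Lemma unit_nJ (R : nzRingType) (J : R -> Prop) : locJ J -> forall x, unitR x -> ~ J x.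
Proof. move=> HL x [y [Hy _]] Jx; exact: (J_noinv HL Jx Hy). Qed.

Lemma J_ri (R : nzRingType) (J : R -> Prop) : locJ J -> forall x r, J x -> J (x * r).
Proof.
move=> HL x r Jx; apply: NNPP => nJ; have [t Ht] := linv HL nJ.
have nJr : ~ J r by move=> Jr; apply: (J_noinv HL Jr (y := t * x)); rewrite -mulrA.
have [y [Hy1 Hy2]] := nonJ_unit HL nJr.
have txy : t * x = y by rewrite -(mulr1 (t * x)) -Hy2 mulrA -(mulrA t) Ht mul1r.
apply: (J_noinv HL Jx (y := r * t)); by rewrite -mulrA txy.
Qed.

Lemma J_two (R : nzRingType) (J : R -> Prop) : locJ J -> twosided_ideal J.
Proof.
move=> HL; split; first exact: J_li.
split; [exact: (J0 HL) | exact: (JD HL) | move=> r x Jx; exact: (J_ri HL r Jx)].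
Qed.

Lemma unitD_J (R : nzRingType) (J : R -> Prop) : locJ J -> forall u j, unitR u -> J j -> unitR (u + j).
Proof.
move=> HL u j Hu Jj; apply: (nonJ_unit HL) => H; apply: (unit_nJ HL Hu).
have := JB HL H Jj; by rewrite addrK.
Qed.

Lemma unit1 (R : nzRingType) : unitR (1 : R).
Proof. by exists 1; rewrite mulr1. Qed.

Lemma unitM (R : nzRingType) (u v : R) : unitR u -> unitR v -> unitR (u * v).
Proof.
move=> [u' [H1 H2]] [v' [H3 H4]]; exists (v' * u'); split.
- by rewrite mulrA -(mulrA v') H1 mulr1 H3.
- by rewrite mulrA -(mulrA u) H4 mulr1 H2.
Qed.

Lemma unitN (R : nzRingType) (u : R) : unitR u -> unitR (- u).
Proof. move=> [u' [H1 H2]]; exists (- u'); by rewrite mulrNN H1 mulrNN. Qed.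

Lemma J_sum (R : nzRingType) (J : R -> Prop) : locJ J -> forall n (F : 'I_n -> R),
  (forall i, J (F i)) -> J (\sum_(i < n) F i).
Proof.
move=> HL n F HF; apply: (big_ind J); [exact: (J0 HL) | exact: (JD HL) | by move=> i _].
Qed.

Lemma J_or_unit (R : nzRingType) (J : R -> Prop) : locJ J -> forall x, J x \/ unitR x.
Proof. move=> HL x; case: (classic (J x)) => H; [by left | right; exact: (nonJ_unit HL)]. Qed.

Notation V2 R := (R^o * R^o)%type.

Lemma indep_at (R : nzRingType) (M : lmodType R) (ms : seq M) :
  (forall rs : seq R, size rs = size ms ->
        \sum_(i < size ms) rs`_i *: ms`_i = 0 ->
        forall i, (i < size ms)%N -> rs`_i *: ms`_i = 0) ->
  forall f : nat -> R, \sum_(j < size ms) f j *: ms`_j = 0 ->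
  forall i, (i < size ms)%N -> f i *: ms`_i = 0.
Proof.
move=> Hind f Hf i Hi.
have := Hind (mkseq f (size ms)) (size_mkseq _ _) _ i Hi; rewrite nth_mkseq //; apply.
rewrite -[X in _ = X]Hf; apply: eq_bigr => j _; by rewrite nth_mkseq.
Qed.

Lemma sum_delta (R : nzRingType) (M : lmodType R) n (F : nat -> M) i :
  (i < n)%N -> \sum_(j < n) ((j : nat) == i)%:R *: F j = F i.
Proof.
move=> Hi; rewrite (bigD1 (Ordinal Hi)) //= eqxx scale1r big1 ?addr0 // => j Hj.
have : (j : nat) != i by apply: contra Hj => /eqP E; apply/eqP; apply: val_inj.
by move/negbTE => ->; rewrite scale0r.
Qed.

Lemma pair_eta2 (R : nzRingType) (x y : R) :
  ((x, y) : V2 R) = x *: ((1, 0) : V2 R) + y *: ((0, 1) : V2 R).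
Proof.
have -> : x *: ((1, 0) : V2 R) = (x * 1, x * 0) by [].
have -> : y *: ((0, 1) : V2 R) = (y * 0, y * 1) by [].
have -> : ((x * 1, x * 0) : V2 R) + (y * 0, y * 1) = (x * 1 + y * 0, x * 0 + y * 1) by [].
by rewrite !mulr1 !mulr0 addr0 add0r.
Qed.

Definition Nab (R : nzRingType) (a b : R) := fun v : V2 R => exists g : R, v = g *: ((a, b) : V2 R).

Lemma Nab_sub (R : nzRingType) (a b : R) : submod (Nab a b).
Proof.
split.
- by exists 0; rewrite scale0r.
- by move=> x y [g ->] [h ->]; exists (g + h); rewrite scalerDl.
- by move=> r x [g ->]; exists (r * g); rewrite scalerA.
Qed.

Lemma V2_two_gen (R : nzRingType) (N : V2 R -> Prop) (HN : submod N) : two_generated (quotT HN).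
Proof.
exists (piq HN (1, 0)), (piq HN (0, 1)) => q.
exists (val q).1, (val q).2.
by rewrite -piqZ -piqZ -piqD -pair_eta2 -surjective_pairing piq_val.
Qed.

Lemma piqB (R : nzRingType) (V : lmodType R) (N : V -> Prop) (HN : submod N) v w :
  piq HN (v - w) = piq HN v - piq HN w.
Proof. by apply: (addIr (piq HN w)); rewrite -piqD !subrK. Qed.

Lemma unit_cancel (R : nzRingType) (u x : R) : unitR u -> u * x = 0 -> x = 0.
Proof. by move=> [u' [H1 _]] H; rewrite -(mul1r x) -H1 -mulrA H mulr0. Qed.

Lemma unit_cancelZ (R : nzRingType) (M : lmodType R) (u : R) (x : M) :
  unitR u -> u *: x = 0 -> x = 0.
Proof. by move=> [u' [H1 _]] H; rewrite -(scale1r x) -H1 -scalerA H scaler0. Qed.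

Lemma unit_m1 (R : nzRingType) (J : R -> Prop) : locJ J -> forall z, J z -> unitR (z - 1).
Proof.
move=> HL z Jz; have := unitN (unitD_J HL (unit1 R) (JN HL Jz)).
by rewrite opprD opprK addrC.
Qed.

Lemma sum_lin2 (R : nzRingType) (M : lmodType R) n (f g : nat -> R) (m : nat -> M) x y :
  \sum_(j < n) (x * f j + y * g j) *: m j =
    x *: \sum_(j < n) f j *: m j + y *: \sum_(j < n) g j *: m j.
Proof. rewrite !scaler_sumr -big_split; apply: eq_bigr => j _; by rewrite scalerDl !scalerA. Qed.

Lemma rchain (R : nzRingType) (J : R -> Prop) : locJ J ->
  (forall M : lmodType R, two_generated M -> direct_sum_of_cyclics M) ->
  forall a b : R, (exists r, a = b * r) \/ (exists r, b = a * r).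
Proof.
move=> HL Hyp a b.
case: (J_or_unit HL a) => [Ja|[a' [Ha1 Ha2]]]; last first.
  by right; exists (a' * b); rewrite mulrA Ha2 mul1r.
case: (J_or_unit HL b) => [Jb|[b' [Hb1 Hb2]]]; last first.
  by left; exists (b' * a); rewrite mulrA Hb2 mul1r.
pose HN := Nab_sub a b.
have [ms [Hspan Hind]] := Hyp _ (V2_two_gen HN).
have [ss [_ He1]] := Hspan (piq HN (1, 0)).
have [tt [_ He2]] := Hspan (piq HN (0, 1)).
pose w := fun j => val (ms`_j) : V2 R.
have Hw : forall j, piq HN (w j) = ms`_j by move=> j; exact: piq_val.
have Hsw : forall (f : nat -> R), piq HN (\sum_(j < size ms) f j *: w j) =
                          \sum_(j < size ms) f j *: ms`_j.
  by move=> f; rewrite piq_sum; apply: eq_bigr => j _; rewrite piqZ Hw.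
have [k0 Hk0] : exists k0, ((1, 0) : V2 R) - \sum_(j < size ms) ss`_j *: w j = k0 *: ((a, b) : V2 R).
  by apply/(piq_eq0 HN); rewrite piqB Hsw -He1 subrr.
have [k1 Hk1] : exists k1, ((0, 1) : V2 R) - \sum_(j < size ms) tt`_j *: w j = k1 *: ((a, b) : V2 R).
  by apply/(piq_eq0 HN); rewrite piqB Hsw -He2 subrr.
have Hc : forall j, (j < size ms)%N -> (a * ss`_j + b * tt`_j) *: ms`_j = 0.
  apply: (indep_at Hind).
  rewrite (sum_lin2 _ (fun j => ss`_j) (fun j => tt`_j) (fun j => ms`_j)).
  rewrite -He1 -He2 -!piqZ -piqD.
  by apply/(piq_eq0 HN); exists 1; rewrite -pair_eta2 scale1r.
have [k Hk] : exists k : nat -> R, forall j, (j < size ms)%N ->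
     (a * ss`_j + b * tt`_j) *: w j = k j *: ((a, b) : V2 R).
  apply: (@fchoice nat R (fun j y => (j < size ms)%N ->
     (a * ss`_j + b * tt`_j) *: w j = y *: ((a, b) : V2 R))) => j.
  case: (boolP (j < size ms)%N) => Hj; last first.
    by exists 0.
  have := Hc j Hj; rewrite -Hw -piqZ => /(piq_eq0 HN) [g Hg]; by exists g => _.
have E1 : \sum_(j < size ms) (a * ss`_j + b * tt`_j) *: w j =
          (\sum_(j < size ms) k j) *: ((a, b) : V2 R).
  by rewrite scaler_suml; apply: eq_bigr => j _; exact: Hk.
have E2 : \sum_(j < size ms) (a * ss`_j + b * tt`_j) *: w j =
          ((a, b) : V2 R) - (a * k0 + b * k1) *: ((a, b) : V2 R).
  rewrite (sum_lin2 _ (fun j => ss`_j) (fun j => tt`_j) w).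
  have -> : \sum_(j < size ms) ss`_j *: w j = ((1, 0) : V2 R) - k0 *: ((a, b) : V2 R).
    by rewrite -Hk0 subKr.
  have -> : \sum_(j < size ms) tt`_j *: w j = ((0, 1) : V2 R) - k1 *: ((a, b) : V2 R).
    by rewrite -Hk1 subKr.
  rewrite !scalerBr !scalerA scalerDl opprD addrACA -pair_eta2 //.
have Key : ((\sum_(j < size ms) k j) + (a * k0 + b * k1)) *: ((a, b) : V2 R) = ((a, b) : V2 R).
  by rewrite scalerDl -E1 E2 subrK.
case: (classic (forall j, (j < size ms)%N -> J (k j))) => Hall.
  have Jz : J ((\sum_(j < size ms) k j) + (a * k0 + b * k1)).
    apply: (JD HL); first by apply: (J_sum HL) => j; apply: Hall.
    apply: (JD HL); exact: (J_ri HL).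
  have Hu := unit_m1 HL Jz.
  have ab0 : ((a, b) : V2 R) = 0.
    apply: (unit_cancelZ Hu); by rewrite scalerBl Key scale1r subrr.
  left; exists 0; rewrite mulr0; exact: (congr1 fst ab0).
have [i [Hi nJk]] : exists i, (i < size ms)%N /\ ~ J (k i).
  apply: NNPP => H; apply: Hall => j Hj; apply: NNPP => nJ; apply: H; by exists j.
have [ki [Hki1 Hki2]] := nonJ_unit HL nJk.
have Hab : ((a, b) : V2 R) = (ki * (a * ss`_i + b * tt`_i)) *: w i.
  by rewrite -scalerA Hk // scalerA Hki1 scale1r.
set d := ki * _ in Hab.
have Ea : a = d * (w i).1 by exact: (congr1 fst Hab).
have Eb : b = d * (w i).2 by exact: (congr1 snd Hab).
case: (J_or_unit HL (w i).1) => [Ju|[u' [Hu1 Hu2]]]; last first.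
  right; exists (u' * (w i).2); by rewrite Eb Ea -mulrA (mulrA (w i).1) Hu2 mul1r.
case: (J_or_unit HL (w i).2) => [Jv|[v' [Hv1 Hv2]]]; last first.
  left; exists (v' * (w i).1); by rewrite Eb Ea -mulrA (mulrA (w i).2) Hv2 mul1r.
have Jzi : J ((w i).1 * ss`_i + (w i).2 * tt`_i) by apply: (JD HL); exact: (J_ri HL).
have Hd : ((w i).1 * ss`_i + (w i).2 * tt`_i - 1) *: ms`_i = 0.
  have := @indep_at _ _ _ Hind (fun j => (w i).1 * ss`_j + (w i).2 * tt`_j - ((j : nat) == i)%:R) _ i Hi.
  rewrite eqxx; apply.
  under eq_bigr do rewrite scalerBl.
  rewrite sumrB sum_delta //.
  rewrite (sum_lin2 _ (fun j => ss`_j) (fun j => tt`_j) (fun j => ms`_j)).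
  rewrite -He1 -He2.
  have -> : ((w i).1 : R) *: piq HN (1, 0) + ((w i).2 : R) *: piq HN (0, 1) = piq HN (w i).
    by rewrite -!piqZ -piqD -pair_eta2 -surjective_pairing.
  by rewrite Hw subrr.
have mi0 : ms`_i = 0 := unit_cancelZ (unit_m1 HL Jzi) Hd.
have [g Hg] : Nab a b (w i) by apply/(piq_eq0 HN); rewrite Hw.
have Jc : J ((a * ss`_i + b * tt`_i) * g).
  by apply: (J_ri HL); apply: (JD HL); exact: (J_ri HL).
have Hu := unitD_J HL (ex_intro _ ki (conj Hki1 Hki2) : unitR (k i)) (JN HL Jc).
have Hz : (k i + - ((a * ss`_i + b * tt`_i) * g)) *: ((a, b) : V2 R) = 0.
  by rewrite scalerDl -(Hk i Hi) Hg scalerA scaleNr subrr.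
have ab0 := unit_cancelZ Hu Hz.
left; exists 0; rewrite mulr0; exact: (congr1 fst ab0).
Qed.

Definition two_princ (S : nzRingType) :=
  forall a b : S, exists c, (exists r s, c = r * a + s * b) /\ (exists r, a = r * c) /\ (exists r, b = r * c).

Lemma princ_from2 (S : nzRingType) : left_noetherian S -> two_princ S ->
  principal_left_ideal_ring S.
Proof.
move=> HN H2 I HI; apply: NNPP => nP.
have Hg : forall a, exists x, I a -> I x /\ ~ exists r, x = r * a.
  move=> a; apply: NNPP => H; apply: nP; exists a => x; split => Hx.
  - apply: NNPP => nx; apply: H; exists x => _; by split.
  - case: Hx => r ->; case: HI => _ _; apply; apply: NNPP => nIa; apply: H; by exists 0.
have [g Hgg] := fchoice Hg.
have [c Hc] := fchoice (fun ab : S * S => H2 ab.1 ab.2).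
pose A n := iter n (fun a => c (a, g a)) 0.
have IA : forall n, I (A n).
  elim=> [|n IH] /=; first by case: HI.
  have [[r [s ->]] _] := Hc (A n, g (A n)).
  case: HI => _ HD HM; apply: HD; apply: HM => //; by case: (Hgg _ IH).
apply: (noeth_strict HN (C := fun n x => exists r, x = r * A n)).
- move=> n; split; first by exists 0; rewrite mul0r.
  + by move=> x y [r ->] [s ->]; exists (r + s); rewrite mulrDl.
  + by move=> r x [s ->]; exists (r * s); rewrite mulrA.
- move=> n x [r ->] /=; have [_ [[t Ht] _]] := Hc (A n, g (A n)).
  by exists (r * t); rewrite /= -mulrA -Ht.
- move=> n; exists (g (A n)); split; last by case: (Hgg _ (IA n)).
  by have [_ [_ [t Ht]]] := Hc (A n, g (A n)); exists t.
Qed.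

Lemma princ_right_from2 (R : nzRingType) : right_noetherian R -> two_princ (R^c) ->
  principal_right_ideal_ring R.
Proof. move=> HN H2; exact: (@princ_from2 (R^c) HN H2). Qed.

Lemma li_sum (S : nzRingType) (A B : S -> Prop) : left_ideal A -> left_ideal B ->
  left_ideal (fun x => exists y z, A y /\ B z /\ x = y + z).
Proof.
move=> [A0 AD AM] [B0 BD BM]; split.
- by exists 0, 0; rewrite addr0.
- move=> x1 x2 [y1 [z1 [H1 [H2 ->]]]] [y2 [z2 [H3 [H4 ->]]]].
  exists (y1 + y2), (z1 + z2); split; [exact: AD | split; [exact: BD|]].
  by rewrite addrACA.
- move=> r x [y [z [H1 [H2 ->]]]]; exists (r * y), (r * z); split; [exact: AM|split; [exact: BM|]].
  by rewrite mulrDr.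
Qed.

Lemma liB (S : nzRingType) (A : S -> Prop) : left_ideal A -> forall x y, A x -> A y -> A (x - y).
Proof. move=> [_ AD AM] x y Hx Hy; apply: AD => //; rewrite -mulN1r; exact: AM. Qed.

Definition artin_hyps (S : nzRingType) (Q : nat -> S -> Prop) :=
  [/\ left_noetherian S, (forall k, left_ideal (Q k)),
      (forall k x, Q k.+1 x -> Q k x) &
      (forall r, (exists s, s * r = 1) \/ (forall k x, Q k x -> Q k.+1 (r * x)))].

Definition stab (S : nzRingType) (L : nat -> S -> Prop) :=
  exists n, forall m, (n <= m)%N -> same_set (L m) (L n).

Lemma layer (S : nzRingType) (Q : nat -> S -> Prop) : artin_hyps Q ->
  forall k (L : nat -> S -> Prop), (forall m, left_ideal (L m)) ->
  (forall m x, L m.+1 x -> L m x) -> (forall m x, L m x -> Q k x) ->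
  stab (fun m x => exists y z, L m y /\ Q k.+1 z /\ x = y + z).
Proof.
move=> [HN HQ HQd HQr] k L HL HLd HLQ.
set V := fun m x => exists y z, L m y /\ Q k.+1 z /\ x = y + z.
have HV : forall m, left_ideal (V m) by move=> m; exact: li_sum.
have Vd : forall m x, V m.+1 x -> V m x.
  by move=> m x [y [z [H1 [H2 ->]]]]; exists y, z; split => //; exact: HLd.
have QV : forall m x, Q k.+1 x -> V m x.
  by move=> m x Hx; exists 0, x; split; [by case: (HL m)| split => //; rewrite add0r].
have VQ : forall m x, V m x -> Q k x.
  move=> m x [y [z [H1 [H2 ->]]]]; case: (HQ k) => _ HD _; apply: HD; [exact: (HLQ m) | exact: HQd].
apply: NNPP => Hns.
have Hstep : forall n, exists px : nat * S, [/\ (n <= px.1)%N, V n px.2 & ~ V px.1 px.2].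
  move=> n; apply: NNPP => H; apply: Hns; exists n => m Hm x; split; first exact: (chain_anti Vd).
  move=> Vnx; apply: NNPP => nVm; apply: H; by exists (m, x).
have [F HF] := fchoice Hstep.
pose a i := iter i (fun n => (F n).1) 0.
pose x i := (F (a i)).2.
have Hax : forall i, V (a i) (x i) by move=> i; case: (HF (a i)).
have Hnx : forall i, ~ V (a i.+1) (x i) by move=> i; case: (HF (a i)).
have Ha : forall i, (a i <= a i.+1)%N by move=> i; case: (HF (a i)).
have Vai : forall i y, V (a i.+1) y -> V (a i) y by move=> i y; exact: (chain_anti Vd (Ha i)).
pose W := fix W (i : nat) : S -> Prop :=
  match i with 0 => Q k.+1 | i'.+1 => fun y => exists w r, W i' w /\ y = w + r * x i' end.
have HW : forall i, left_ideal (W i).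
  elim=> [|i IH] /=; first exact: HQ.
  case: IH => W0 WD WM; split.
  - by exists 0, 0; rewrite mul0r addr0.
  - move=> y1 y2 [w1 [r1 [H1 ->]]] [w2 [r2 [H2 ->]]]; exists (w1 + w2), (r1 + r2); split; first exact: WD.
    by rewrite mulrDl addrACA.
  - move=> r y [w [s [H ->]]]; exists (r * w), (r * s); split; first exact: WM.
    by rewrite mulrDr mulrA.
have D : forall i y, W i y -> V (a i) y -> Q k.+1 y.
  elim=> [|i IH] y /=; first by [].
  move=> [w [r [Hw ->]]] Hy.
  have Hxi := Hax i.
  have Hyi : V (a i) (w + r * x i) by exact: Vai.
  have rxV : V (a i) (r * x i) by case: (HV (a i)) => _ _; apply.
  have wV : V (a i) w by have := liB (HV (a i)) Hyi rxV; rewrite addrK.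
  have Qw := IH w Hw wV.
  case: (HQr r) => [[s Hs]|Hr].
  - exfalso; apply: (Hnx i).
    have wV' : V (a i.+1) w := QV _ _ Qw.
    have rx' : V (a i.+1) (r * x i) by have := liB (HV (a i.+1)) Hy wV'; rewrite addrC addKr.
    by rewrite -(mul1r (x i)) -Hs -mulrA; case: (HV (a i.+1)) => _ _; apply.
  - case: (HQ k.+1) => _ HD _; apply: HD => //; apply: Hr; exact: (VQ _ _ Hxi).
apply: (noeth_strict HN (C := W)) => //.
- move=> i y Wy /=; exists y, 0; split => //; by rewrite mul0r addr0.
- move=> i; exists (x i); split.
  + by exists 0, 1; split; [case: (HW i) | rewrite mul1r add0r].
  + move=> Wx; apply: (Hnx i); apply: QV; exact: (D i (x i) Wx (Hax i)).
Qed.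

Lemma artin_step (S : nzRingType) (Q : nat -> S -> Prop) : artin_hyps Q -> forall k,
  (forall L : nat -> S -> Prop, (forall m, left_ideal (L m)) ->
    (forall m x, L m.+1 x -> L m x) -> (forall m x, L m x -> Q k.+1 x) -> stab L) ->
  (forall L : nat -> S -> Prop, (forall m, left_ideal (L m)) ->
    (forall m x, L m.+1 x -> L m x) -> (forall m x, L m x -> Q k x) -> stab L).
Proof.
move=> HA k IH L HL HLd HLQ.
have [n1 Hn1] := IH (fun m x => L m x /\ Q k.+1 x)
  (fun m => match HL m, (let: And4 _ H _ _ := HA in H) k.+1 with
            | And3 A0 AD AM, And3 B0 BD BM => And3 (conj A0 B0)
                (fun x y Hx Hy => conj (AD _ _ (proj1 Hx) (proj1 Hy)) (BD _ _ (proj2 Hx) (proj2 Hy)))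
                (fun r x Hx => conj (AM r _ (proj1 Hx)) (BM r _ (proj2 Hx))) end)
  (fun m x H => conj (HLd m x (proj1 H)) (proj2 H)) (fun m x H => proj2 H).
have [n2 Hn2] := layer HA HL HLd HLQ.
exists (maxn n1 n2) => m Hm x; split; first exact: (chain_anti HLd Hm).
move=> Lnx.
have Hn1m : (n1 <= m)%N by apply: leq_trans Hm; exact: leq_maxl.
have Hn2m : (n2 <= m)%N by apply: leq_trans Hm; exact: leq_maxr.
have Hn2n : (n2 <= maxn n1 n2)%N by exact: leq_maxr.
have Hn1n : (n1 <= maxn n1 n2)%N by exact: leq_maxl.
have Vn : exists y z, L (maxn n1 n2) y /\ Q k.+1 z /\ x = y + z.
  by exists x, 0; split => //; split; [by case: HA => _ /(_ k.+1) [] | rewrite addr0].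
have [y [z [Ly [Qz Exz]]]] : exists y z, L m y /\ Q k.+1 z /\ x = y + z.
  by apply/(Hn2 m Hn2m); apply/(Hn2 _ Hn2n).
have Lnz : L (maxn n1 n2) z.
  have -> : z = x - y by rewrite Exz addrC addKr.
  apply: liB => //; exact: (chain_anti HLd Hm).
have [Lmz _] : L m z /\ Q k.+1 z by apply/(Hn1 m Hn1m); apply/(Hn1 _ Hn1n).
rewrite Exz; case: (HL m) => _ HD _; exact: HD.
Qed.

Lemma artin_gen (S : nzRingType) (Q : nat -> S -> Prop) (N : nat) : artin_hyps Q ->
  (forall x, Q 0 x) -> (forall x, Q N x -> x = 0) -> left_artinian S.
Proof.
move=> HA HQ0 HQN.
have P : forall d k, (k + d)%N = N -> forall L : nat -> S -> Prop, (forall m, left_ideal (L m)) ->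
    (forall m x, L m.+1 x -> L m x) -> (forall m x, L m x -> Q k x) -> stab L.
  elim=> [|d IHd] k Hk.
  - rewrite addn0 in Hk; subst k => L HL HLd HLQ; exists 0 => m _ x.
    split => H; first by rewrite (HQN _ (HLQ _ _ H)); case: (HL 0).
    by rewrite (HQN _ (HLQ _ _ H)); case: (HL m).
  - apply: artin_step => //; apply: IHd; by rewrite addSnnS.
move=> L HL HLd; exact: (P N 0 (add0n N) L HL HLd (fun _ _ _ => HQ0 _)).
Qed.

Definition Jgen (R : nzRingType) (J : R -> Prop) (p : R) := forall x, J x <-> exists r, x = p * r.

Lemma Jp (R : nzRingType) (J : R -> Prop) p : Jgen J p -> J p.
Proof. by move=> Hp; apply/Hp; exists 1; rewrite mulr1. Qed.

Lemma rp_pr (R : nzRingType) (J : R -> Prop) p : locJ J -> Jgen J p ->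
  forall k r, exists s, r * p ^+ k = p ^+ k * s.
Proof.
move=> HL Hp; elim=> [|k IH] r; first by exists r; rewrite expr0 mulr1 mul1r.
have [s Hs] := IH r.
have [t Ht] : exists t, s * p = p * t by apply/Hp; apply: (JM HL); exact: (Jp Hp).
by exists t; rewrite exprSr mulrA Hs -mulrA Ht mulrA -exprSr.
Qed.

Definition Qp (R : nzRingType) (p : R) := fun k x => exists y, x = p ^+ k * y.

Lemma Qp_hyps_left (R : nzRingType) (J : R -> Prop) p : locJ J -> Jgen J p -> artin_hyps (Qp p).
Proof.
move=> HL Hp; have [_ _ HN] := HL; split => //.
- move=> k; split; first by exists 0; rewrite mulr0.
  + by move=> x y [u ->] [v ->]; exists (u + v); rewrite mulrDr.
  + move=> r x [y ->]; have [s Hs] := rp_pr HL Hp k r; by exists (s * y); rewrite mulrA Hs mulrA.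
- by move=> k x [y ->]; exists (p * y); rewrite exprSr mulrA.
- move=> r; case: (J_or_unit HL r) => [Jr|[s [Hs _]]]; last by left; exists s.
  right => k x [y ->]; have [t ->] := (Hp r).1 Jr.
  have [s Hs] := rp_pr HL Hp k t; by exists (s * y); rewrite -mulrA (mulrA t) Hs !mulrA -exprS.
Qed.

Lemma Qp_hyps_right (R : nzRingType) (J : R -> Prop) p : locJ J -> right_noetherian R -> Jgen J p ->
  @artin_hyps (R^c) (@Qp R p).
Proof.
move=> HL HRN Hp; split => //.
- move=> k; split; first by exists 0; rewrite mulr0.
  + by move=> x y [u ->] [v ->]; exists (u + v); rewrite mulrDr.
  + by move=> r x [y ->]; exists ((y : R) * r); rewrite [in RHS]mulrA.
- by move=> k x [y ->]; exists (p * y); rewrite exprSr mulrA.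
- move=> r; case: (J_or_unit HL r) => [Jr|[s [_ Hs]]]; last by left; exists s.
  right => k x [y ->]; have [t Ht] := (Hp ((y : R) * r)).1 (JM HL _ Jr).
  exists t; change ((p ^+ k * y) * r = p ^+ k.+1 * t :> R); by rewrite -mulrA Ht exprSr mulrA.
Qed.

Lemma caseA (R : nzRingType) (J : R -> Prop) p N : locJ J -> right_noetherian R -> Jgen J p ->
  p ^+ N = 0 -> artinian R.
Proof.
move=> HL HRN Hp HpN; split.
- apply: (@artin_gen R (Qp p) N (Qp_hyps_left HL Hp)).
  + by move=> x; exists x; rewrite expr0 mul1r.
  + by move=> x [y ->]; rewrite HpN mul0r.
- apply: (@artin_gen (R^c) (@Qp R p) N (Qp_hyps_right HL HRN Hp)).
  + by move=> x; exists x; rewrite expr0 mul1r.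
  + by move=> x [y ->]; rewrite HpN mul0r.
Qed.

Lemma Kp (R : nzRingType) (p : R) : right_noetherian R ->
  forall x, (forall n, Qp p n x) -> exists w, (forall n, Qp p n w) /\ x = p * w.
Proof.
move=> HRN x Kx.
pose A := fun n (z : R) => p ^+ n * z = 0.
have [n0 Hn0] : exists n0, forall m, (n0 <= m)%N -> same_set (A m) (A n0).
  apply: HRN.
  - move=> n; split; first by rewrite /A mulr0.
    + by move=> u v; rewrite /A mulrDr => -> ->; rewrite addr0.
    + by move=> r z; rewrite /A mulrA => ->; rewrite mul0r.
  - by move=> n z; rewrite /A exprS -mulrA => ->; rewrite mulr0.
have [y Hy] := fchoice Kx.
pose w m := p ^+ n0 * y (n0 + m)%N.
have Hw : forall m, w m = p * w m.+1.
  move=> m; have HA : A (n0 + m)%N (y (n0 + m)%N - p * y (n0 + m.+1)%N).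
    rewrite /A mulrBr mulrA -exprSr -addnS -!Hy; exact: subrr.
  have := (Hn0 _ (leq_addr m n0) _).1 HA; rewrite /A mulrBr => /subr0_eq E.
  by rewrite /w E !mulrA -exprSr exprS.
have Hw1 : forall n, w 1 = p ^+ n * w n.+1.
  elim=> [|n IH]; first by rewrite expr0 mul1r.
  by rewrite IH Hw mulrA -exprSr.
exists (w 1); split; first by move=> n; exists (w n.+1); exact: Hw1.
by rewrite -Hw /w addn0 -Hy.
Qed.

Lemma Kzero (R : nzRingType) (J : R -> Prop) p : locJ J -> right_noetherian R -> Jgen J p ->
  forall x, (forall n, Qp p n x) -> x = 0.
Proof.
move=> HL HRN Hp x0 Kx0; apply: NNPP => nx0.
have [HJ HU HLN] := HL.
pose K := fun x => forall n, Qp p n x.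
have HK : left_ideal K.
  have [_ HQ _ _] := Qp_hyps_left HL Hp.
  split.
  - by move=> n; case: (HQ n).
  - by move=> x y Hx Hy n; case: (HQ n) => _ HD _; apply: HD.
  - by move=> r x Hx n; case: (HQ n) => _ _ HM; apply: HM.
have HL0 : left_ideal (fun x : R => x = 0).
  by split => [//|x y -> ->|r x ->]; rewrite ?addr0 ?mulr0.
have L0K : lsub (fun x : R => x = 0) K by move=> x ->; case: HK.
have [L [HLl _ HLK [y [Ky nLy]] Hmax]] :=
  maxlemma HLN HK HL0 L0K (ex_intro _ x0 (conj Kx0 nx0)).
have JK : forall j x, J j -> K x -> L (j * x).
  move=> j x Jj Kx; case: (classic (L x)) => Lx.
    by case: HLl => _ _; apply.
  pose M' := fun r => L (r * x).
  have HM' : left_ideal M'.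
    split; rewrite /M'.
    - by rewrite mul0r; case: HLl.
    - by move=> u v Hu Hv; rewrite mulrDl; case: HLl => _ HD _; apply: HD.
    - by move=> r u Hu; rewrite -mulrA; case: HLl => _ _; apply.
  have MM : maximal_left_ideal M'.
    split => //; first by rewrite /M' mul1r.
    move=> I HI HMI.
    pose I' := fun z => exists u v, (fun u => exists i, I i /\ u = i * x) u /\ L v /\ z = u + v.
    have HI' : left_ideal I'.
      apply: li_sum => //; split.
      - by exists 0; split; [by case: HI | by rewrite mul0r].
      - by move=> u v [i [Hi ->]] [i' [Hi' ->]]; exists (i + i'); split; [case: HI => _ HD _; apply: HD | rewrite mulrDl].
      - by move=> r u [i [Hi ->]]; exists (r * i); split; [case: HI => _ _; apply | rewrite mulrA].
    have LI' : lsub L I' by move=> z Lz; exists 0, z; split; [exists 0; split; [by case: HI|by rewrite mul0r] | split => //; rewrite add0r].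
    have I'K : lsub I' K.
      move=> z [u [v [[i [Hi ->]] [Lv ->]]]]; case: HK => _ HD HM; apply: HD; [exact: HM | exact: HLK].
    case: (Hmax I' HI' LI' I'K) => H.
    + left => r; split => [Ir|]; last exact: HMI.
      apply: H; exists (r * x), 0; split; [by exists r | split; [by case: HLl | by rewrite addr0]].
    + right; have := H x Kx; rewrite /I' => -[u [v [[i [Hi Eu]] [Lv Ex]]]].
      have M1i : M' (1 - i) by rewrite /M' mulrBl mul1r {1}Ex Eu addrC addKr.
      have := HMI _ M1i; case: HI => _ HD _ H1i.
      by have := HD _ _ Hi H1i; rewrite addrC subrK.
  by have /(HU _ MM) := Jj.
have [w [Kw Ey]] := Kp HRN Ky.
by apply: nLy; rewrite Ey; apply: JK => //; exact: (Jp Hp).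
Qed.

Lemma pk_form (R : nzRingType) (J : R -> Prop) p : locJ J -> right_noetherian R -> Jgen J p ->
  forall x, x <> 0 -> exists k u, unitR u /\ x = p ^+ k * u.
Proof.
move=> HL HRN Hp x nx.
have [n Hn] : exists n, ~ Qp p n x.
  apply: NNPP => H; apply: nx; apply: (Kzero HL HRN Hp) => n; apply: NNPP => H'; apply: H; by exists n.
elim: n Hn => [|n IH] Hn; first by exfalso; apply: Hn; exists x; rewrite expr0 mul1r.
case: (classic (Qp p n x)) => [[y Ey]|H]; last exact: IH.
case: (J_or_unit HL y) => [Jy|Uy]; last by exists n, y.
exfalso; apply: Hn; have [s Es] := (Hp y).1 Jy; exists s; by rewrite Ey Es mulrA -exprSr.
Qed.

Lemma rcancel (R : nzRingType) (v x : R) : unitR v -> x * v = 0 -> x = 0.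
Proof. by move=> [v' [_ H2]] H; rewrite -(mulr1 x) -H2 mulrA H mul0r. Qed.

Lemma unit_p (R : nzRingType) (J : R -> Prop) p : locJ J -> Jgen J p -> (forall N, p ^+ N <> 0) ->
  forall u, unitR u -> exists u', unitR u' /\ u * p = p * u'.
Proof.
move=> HL Hp Hnil u Hu.
have [s Es] : exists s, u * p = p * s by apply/Hp; apply: (JM HL); exact: (Jp Hp).
exists s; split => //; case: (J_or_unit HL s) => [Js|//]; exfalso.
have [t Et] := (Hp s).1 Js.
have [ui [Hui1 Hui2]] := Hu.
have [t' Et'] : exists t', ui * p = p * t' by apply/Hp; apply: (JM HL); exact: (Jp Hp).
have Ep : p = p * (t' * p * t).
  by rewrite -{1}(mul1r p) -Hui1 -mulrA Es Et mulrA Et' !mulrA.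
have Jj : J (t' * p * t) by apply: (J_ri HL); apply: (JM HL); exact: (Jp Hp).
have Hu1 := unitD_J HL (unit1 R) (JN HL Jj).
apply: (Hnil 1); rewrite expr1; apply: (rcancel Hu1).
by rewrite mulrDr mulr1 mulrN -Ep subrr.
Qed.

Lemma unit_pk (R : nzRingType) (J : R -> Prop) p : locJ J -> Jgen J p -> (forall N, p ^+ N <> 0) ->
  forall k u, unitR u -> exists u', unitR u' /\ u * p ^+ k = p ^+ k * u'.
Proof.
move=> HL Hp Hnil; elim=> [|k IH] u Hu; first by exists u; rewrite expr0 mulr1 mul1r.
have [u1 [Hu1 E1]] := IH u Hu.
have [u2 [Hu2 E2]] := unit_p HL Hp Hnil Hu1.
by exists u2; split => //; rewrite exprSr mulrA E1 -mulrA E2 mulrA.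
Qed.

Lemma domainB (R : nzRingType) (J : R -> Prop) p : locJ J -> right_noetherian R -> Jgen J p ->
  (forall N, p ^+ N <> 0) -> forall x y : R, x * y = 0 -> x = 0 \/ y = 0.
Proof.
move=> HL HRN Hp Hnil x y Hxy; apply: NNPP => H.
have nx : x <> 0 by move=> E; apply: H; left.
have ny : y <> 0 by move=> E; apply: H; right.
have [k [u [Hu Ex]]] := pk_form HL HRN Hp nx.
have [l [v [Hv Ey]]] := pk_form HL HRN Hp ny.
have [u' [Hu' Eu]] := unit_pk HL Hp Hnil l Hu.
apply: (Hnil (k + l)%N); apply: (rcancel (unitM Hu' Hv)).
have E : x * y = p ^+ (k + l) * (u' * v).
  by rewrite Ex Ey exprD -mulrA (mulrA u) Eu !mulrA.
by rewrite -E.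
Qed.

Lemma ore (S : nzRingType) : left_noetherian S -> (forall x y : S, x * y = 0 -> x = 0 \/ y = 0) ->
  forall a b : S, a <> 0 -> b <> 0 -> exists al be, al * a = be * b /\ al * a <> 0.
Proof.
move=> HN Hd a b na nb; apply: NNPP => Hno.
have H0 : forall al be, al * a = be * b -> al = 0.
  move=> al be E; case: (Hd al a _) => // ; apply: NNPP => nz; apply: Hno; by exists al, be.
pose I := fix I (n : nat) : S -> Prop :=
  match n with 0 => fun x => exists r, x = r * b
  | n'.+1 => fun x => exists r y, I n' y /\ x = r * b + y * a end.
have HI : forall n, left_ideal (I n).
  elim=> [|n [I0 ID IM]] /=; split.
  - by exists 0; rewrite mul0r.
  - by move=> x y [r ->] [s ->]; exists (r + s); rewrite mulrDl.
  - by move=> r x [s ->]; exists (r * s); rewrite mulrA.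
  - by exists 0, 0; split => //; rewrite !mul0r addr0.
  - move=> x y [r [u [Hu ->]]] [s [v [Hv ->]]]; exists (r + s), (u + v); split; first exact: ID.
    by rewrite mulrDl mulrDl addrACA.
  - move=> t x [r [u [Hu ->]]]; exists (t * r), (t * u); split; first exact: IM.
    by rewrite mulrDr !mulrA.
have Hinc : forall n x, I n x -> I n.+1 x.
  elim=> [|n IH] x /=.
  - by move=> [r ->]; exists r, 0; split; [exists 0; rewrite mul0r | rewrite mul0r addr0].
  - by move=> [r [y [Hy ->]]]; exists r, y; split => //; exact: IH.
have Hmem : forall n, I n (b * a ^+ n).
  elim=> [|n IH] /=; first by exists 1; rewrite expr0 mulr1 mul1r.
  by exists 0, (b * a ^+ n); split => //; rewrite mul0r add0r exprSr mulrA.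
have Hnot : forall n, ~ I n (b * a ^+ n.+1).
  elim=> [|n IH] /=.
  - move=> [r E]; have := H0 b r; rewrite expr1 in E; move/(_ E) => b0; exact: nb.
  - move=> [r [y [Hy E]]]; apply: IH.
    have E' : (b * a ^+ n.+1 - y) * a = r * b.
      by rewrite mulrBl -mulrA -exprSr E addrK.
    have := H0 _ _ E' => /subr0_eq ->; exact: Hy.
apply: (noeth_strict HN (C := I)) => // n; exists (b * a ^+ n.+1); split => //.
Qed.

Definition fab (R : nzRingType) (a b : R) (v : V2 R) : R := (v.1 : R) * a + (v.2 : R) * b.

Lemma fabD (R : nzRingType) (a b : R) v w : fab a b (v + w) = fab a b v + fab a b w.
Proof. by rewrite /fab /= !mulrDl addrACA. Qed.

Lemma fabZ (R : nzRingType) (a b : R) r v : fab a b (r *: v) = r * fab a b v.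
Proof. by rewrite /fab /= mulrDr !mulrA. Qed.

Lemma fabN (R : nzRingType) (a b : R) v : fab a b (- v) = - fab a b v.
Proof. by rewrite -scaleN1r fabZ mulN1r. Qed.

Lemma fab0 (R : nzRingType) (a b : R) : fab a b 0 = 0.
Proof. by rewrite /fab /= !mul0r addr0. Qed.

Lemma Nf_sub (R : nzRingType) (a b : R) : submod (fun v => fab a b v = 0).
Proof.
split; first exact: fab0.
- by move=> x y Hx Hy; rewrite fabD Hx Hy addr0.
- by move=> r x Hx; rewrite fabZ Hx mulr0.
Qed.

Lemma sum_delta_r (R : nzRingType) n (F : nat -> R) i :
  (i < n)%N -> \sum_(j < n) ((j : nat) == i)%:R * F j = F i.
Proof.
move=> Hi; rewrite (bigD1 (Ordinal Hi)) //= eqxx mul1r big1 ?addr0 // => j Hj.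
have : (j : nat) != i by apply: contra Hj => /eqP E; apply/eqP; apply: val_inj.
by move/negbTE => ->; rewrite mul0r.
Qed.

Lemma two_princ_dom (R : nzRingType) : left_noetherian R ->
  (forall x y : R, x * y = 0 -> x = 0 \/ y = 0) ->
  (forall M : lmodType R, two_generated M -> direct_sum_of_cyclics M) -> two_princ R.
Proof.
move=> HLN Hd Hyp a b.
case: (classic (a = 0)) => [->|na].
  by exists b; split; [exists 0, 1; rewrite mul0r mul1r add0r | split; [exists 0; rewrite mul0r | exists 1; rewrite mul1r]].
case: (classic (b = 0)) => [->|nb].
  by exists a; split; [exists 1, 0; rewrite mul0r mul1r addr0 | split; [exists 1; rewrite mul1r | exists 0; rewrite mul0r]].
pose HN := Nf_sub a b.
pose phi := fun q : quotT HN => fab a b (val q).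
have phi_piq : forall v, phi (piq HN v) = fab a b v.
  move=> v; have := mkq_valmk HN v; rewrite fabD fabN => /subr0_eq; exact.
have phiD : forall q1 q2, phi (q1 + q2) = phi q1 + phi q2.
  move=> q1 q2; have -> : q1 + q2 = piq HN (val q1 + val q2) by [].
  by rewrite phi_piq fabD.
have phiZ : forall r q, phi (r *: q) = r * phi q.
  move=> r q; have -> : r *: q = piq HN (r *: val q) by [].
  by rewrite phi_piq fabZ.
have phi0 : phi 0 = 0 by rewrite -(piq0 HN) phi_piq fab0.
have phi_inj : forall q, phi q = 0 -> q = 0.
  by move=> q H; rewrite -(piq_val q); apply/(piq_eq0 HN).
have phi_sum : forall n (F : 'I_n -> quotT HN), phi (\sum_(i < n) F i) = \sum_(i < n) phi (F i).
  by move=> n F; apply: (big_morph phi phiD phi0).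
have [ms [Hspan Hind]] := Hyp _ (V2_two_gen HN).
have [ss [_ He1]] := Hspan (piq HN (1, 0)).
have [tt [_ He2]] := Hspan (piq HN (0, 1)).
have Ea : a = \sum_(j < size ms) ss`_j * phi ms`_j.
  have := congr1 phi He1; rewrite phi_piq phi_sum /fab /= mul1r mul0r addr0 => E; apply: (etrans E).
  by apply: eq_bigr => j _; rewrite phiZ.
have Eb : b = \sum_(j < size ms) tt`_j * phi ms`_j.
  have := congr1 phi He2; rewrite phi_piq phi_sum /fab /= mul1r mul0r add0r => E; apply: (etrans E).
  by apply: eq_bigr => j _; rewrite phiZ.
case: (classic (exists i j, [/\ (i < size ms)%N, (j < size ms)%N, i != j,
          phi ms`_i <> 0 & phi ms`_j <> 0])) => [[i [j [Hi Hj Hij Hpi Hpj]]]|Hno].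
  exfalso; have [al [be [Eab Hne]]] := ore HLN Hd Hpi Hpj.
  have := @indep_at _ _ _ Hind (fun l => (l == i)%:R * al + (l == j)%:R * - be) _ i Hi.
  rewrite eqxx mul1r (negbTE Hij) mul0r addr0 => Hz.
  apply: Hne; rewrite -phiZ Hz //; apply: phi_inj; rewrite phi_sum.
  under eq_bigr do rewrite phiZ mulrDl -!mulrA.
  rewrite big_split /= (sum_delta_r (fun l => al * phi ms`_l) Hi) (sum_delta_r (fun l => - be * phi ms`_l) Hj).
  by rewrite Eab mulNr subrr.
have [i [Hi Hpi]] : exists i, (i < size ms)%N /\ phi ms`_i <> 0.
  apply: NNPP => H; apply: na; apply: (etrans Ea); apply: big1 => l _; case: (classic (phi ms`_l = 0)) => [->|nl].
    by rewrite mulr0.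
  exfalso; apply: H; exists (nat_of_ord l); by split.
have Hz : forall l : 'I_(size ms), l != Ordinal Hi -> phi ms`_l = 0.
  move=> l Hl; apply: NNPP => nl; apply: Hno; exists i, l; split => //.
  by apply: contra Hl => /eqP E; apply/eqP; apply: val_inj.
exists (phi ms`_i); split.
  by exists (val ms`_i).1, (val ms`_i).2.
split.
- exists ss`_i; apply: (etrans Ea); rewrite (bigD1 (Ordinal Hi)) //= big1 ?addr0 // => l Hl; by rewrite Hz // mulr0.
- exists tt`_i; apply: (etrans Eb); rewrite (bigD1 (Ordinal Hi)) //= big1 ?addr0 // => l Hl; by rewrite Hz // mulr0.
Qed.

Theorem theorem2p8 (R : nzRingType) :
  local_ring R -> noetherian R ->
  (forall M : lmodType R, two_generated M -> direct_sum_of_cyclics M) ->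
  (artinian R /\ principal_left_ideal_ring R) \/
  (artinian R /\ principal_right_ideal_ring R) \/
  (prime_ring R /\
   forall I : R -> Prop, twosided_ideal I -> principal_left I /\ principal_right I).
Proof.
move=> [J [HJ HU]] [HLN HRN] Hyp.
have HL : locJ J by split.
have Hrc := rchain HL Hyp.
have PR : principal_right_ideal_ring R.
  apply: (princ_right_from2 HRN) => a b.
  case: (Hrc a b) => [[r Er]|[r Er]].
  - exists b; split; first by exists 0, 1; rewrite mul0r mul1r add0r.
    by split; [exists r; exact: Er | exists 1; rewrite mul1r].
  - exists a; split; first by exists 1, 0; rewrite mul0r mul1r addr0.
    by split; [exists 1; rewrite mul1r | exists r; exact: Er].
have [p Hp] := PR J (J_two HL).2.
case: (classic (exists N, p ^+ N = 0)) => [[N HN]|Hnil].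
  by right; left; split => //; exact: (caseA HL HRN Hp HN).
right; right.
have Hnil' : forall N, p ^+ N <> 0 by move=> N HN; apply: Hnil; exists N.
have Hd := domainB HL HRN Hp Hnil'.
have PL : principal_left_ideal_ring R := princ_from2 HLN (two_princ_dom HLN Hd Hyp).
split.
- move=> A B HA HB HAB; case: (classic (forall a, A a -> a = 0)) => [H|H]; first by left.
  have [a [Aa na]] : exists a, A a /\ a <> 0.
    apply: NNPP => H'; apply: H => a Aa; apply: NNPP => na; apply: H'; by exists a.
  right => b Bb; case: (Hd a b (HAB a b Aa Bb)) => // E; by exfalso.
- by move=> I [HIl HIr]; split; [exact: PL | exact: PR].
Qed.
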